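(* Let $k=\mathbb{F}_q$ with $q=p^m$, $p$ prime, $m\geq 1$. (1) Let $p_0,p',q_0,q'$ be four closed points of degree $2$ in $\mathbb{P}^2$ such that $\{p_0,p'\}$ is in general position and $\{q_0,q'\}$ is in general position. Then there exists $A\in\mathrm{Aut}(\mathbb{P}^2_k)=\mathrm{PGL}_3(k)$ sending $p_0$ onto $q_0$ and $p'$ onto $q'$. (2) Let $p_0,q_0$ be two closed points of degree $4$ in $\mathbb{P}^2$, each in general position. Then there exists $A\in\mathrm{Aut}(\mathbb{P}^2_k)$ sending $p_0$ onto $q_0$.
   Context: A closed point of degree $d$ of $\mathbb{P}^2_k$ corresponds to a Galois orbit of $d$ geometric points. A collection of closed points is in general position if the four geometric points involved (the two geometric components of each of the two degree-$2$ points, resp. the four geometric components of the degree-$4$ point) are such that no three are collinear. *)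

(* Defs.v *)
From HB Require Import structures.
From mathcomp Require Import all_boot all_order all_algebra all_field.
Set Implicit Arguments. Unset Strict Implicit. Unset Printing Implicit Defensive.
Import GRing.Theory.
Local Open Scope ring_scope.

(* Conventions: k = F_q is realised as the subfield {x | x^q = x} of a finite
   field L with #|L| = q^d.  Geometric points of P^2 (over L) are nonzero row
   vectors 'rV[L]_3 up to nonzero scalars; the Galois group Gal(L/k) is
   generated by the q-Frobenius, acting coordinatewise.  A closed point of
   degree d (whose geometric points are all defined over L) is the Frobenius
   orbit of a representative vector v, of exact projective size d. *)

Section Defs.
Variable L : finFieldType.

Definition frobv (q : nat) (v : 'rV[L]_3) : 'rV[L]_3 := map_mx (fun x => x ^+ q) v.

Definition peq (u v : 'rV[L]_3) : Prop := exists c : L, c != 0 /\ u = c *: v.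

Definition on_pt (q : nat) (v u : 'rV[L]_3) : Prop :=
  exists i : nat, peq u (iter i (frobv q) v).

Definition closed_deg (q d : nat) (v : 'rV[L]_3) : Prop :=
  v != 0 /\
  (forall i j : nat, (i < j < d)%N -> ~ peq (iter i (frobv q) v) (iter j (frobv q) v)) /\
  peq (iter d (frobv q) v) v.

Definition mx3 (u v w : 'rV[L]_3) : 'M[L]_3 :=
  \matrix_(i < 3, j < 3)
    (match nat_of_ord i with 0 => u ord0 j | 1 => v ord0 j | _ => w ord0 j end).

Definition collinear (u v w : 'rV[L]_3) : Prop := \det (mx3 u v w) = 0.

Definition gen_pos4 (f : 'I_4 -> 'rV[L]_3) : Prop :=
  forall i j l : 'I_4, i != j -> j != l -> i != l -> ~ collinear (f i) (f j) (f l).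

Definition in_PGL3 (q : nat) (A : 'M[L]_3) : Prop :=
  (forall i j, A i j ^+ q = A i j) /\ A \in unitmx.

Definition maps_onto (q : nat) (A : 'M[L]_3) (v w : 'rV[L]_3) : Prop :=
  (forall u, on_pt q v u -> on_pt q w (u *m A)) /\
  (forall u', on_pt q w u' -> exists u, on_pt q v u /\ peq u' (u *m A)).

End Defs.

Definition pts22 (L : finFieldType) (q : nat) (v w : 'rV[L]_3) (i : 'I_4) : 'rV[L]_3 :=
  match nat_of_ord i with
  | 0 => v | 1 => frobv q v | 2 => w | _ => frobv q w end.

Definition pts4 (L : finFieldType) (q : nat) (v : 'rV[L]_3) (i : 'I_4) : 'rV[L]_3 :=
  iter (nat_of_ord i) (frobv q) v.

(* Main.v *)
Require Import Defs.
From HB Require Import structures.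
From mathcomp Require Import all_boot all_order all_algebra all_field.
From mathcomp Require Import ring zify.
Set Implicit Arguments. Unset Strict Implicit. Unset Printing Implicit Defensive.
Import GRing.Theory.
Local Open Scope ring_scope.

Definition i30 : 'I_3 := @Ordinal 3 0 isT.
Definition i31 : 'I_3 := @Ordinal 3 1 isT.
Definition i32 : 'I_3 := @Ordinal 3 2 isT.
Definition i40 : 'I_4 := @Ordinal 4 0 isT.
Definition i41 : 'I_4 := @Ordinal 4 1 isT.
Definition i42 : 'I_4 := @Ordinal 4 2 isT.
Definition i43 : 'I_4 := @Ordinal 4 3 isT.

Lemma ord3_cases (i : 'I_3) : [\/ i = i30, i = i31 | i = i32].
Proof.
case: i => [[|[|[|k]]] Hi]; [constructor 1|constructor 2|constructor 3|by []];
  exact: val_inj.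
Qed.

Lemma ord4_cases (i : 'I_4) : [\/ i = i40, i = i41, i = i42 | i = i43].
Proof.
case: i => [[|[|[|[|k]]]] Hi]; [constructor 1|constructor 2|constructor 3|constructor 4|by []];
  exact: val_inj.
Qed.

Section Gen.
Variable L : finFieldType.

Definition row3 (a b c : L) : 'rV[L]_3 :=
  \row_(j < 3) match nat_of_ord j with 0 => a | 1 => b | _ => c end.

Lemma mx3_mul (r u v w : 'rV[L]_3) :
  r *m mx3 u v w = r 0 i30 *: u + r 0 i31 *: v + r 0 i32 *: w.
Proof.
apply/rowP => j; rewrite !mxE !big_ord_recl big_ord0 !mxE /=.
rewrite addr0 addrA !(ord1 (0 : 'I_1)).
have -> : lift ord0 ord0 = i31 :> 'I_3 by exact: val_inj.
have -> : lift ord0 (lift ord0 ord0) = i32 :> 'I_3 by exact: val_inj.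
have -> : ord0 = i30 :> 'I_3 by exact: val_inj.
done.
Qed.

Lemma row3_mul (a b c : L) (u v w : 'rV[L]_3) :
  row3 a b c *m mx3 u v w = a *: u + b *: v + c *: w.
Proof. by rewrite mx3_mul !mxE. Qed.

Lemma mx3_mulr (u v w : 'rV[L]_3) (B : 'M[L]_3) :
  mx3 u v w *m B = mx3 (u *m B) (v *m B) (w *m B).
Proof.
apply/matrixP => i j; rewrite !mxE.
case: (ord3_cases i) => ->; rewrite /=; apply: eq_bigr => k _; rewrite !mxE /=;
  by rewrite (ord1 (0 : 'I_1)).
Qed.

Lemma mx3_scale (c : L) (u v w : 'rV[L]_3) :
  mx3 (c *: u) (c *: v) (c *: w) = c *: mx3 u v w.
Proof.
apply/matrixP => i j; rewrite !mxE.
by case: (ord3_cases i) => ->; rewrite /= ?mxE.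
Qed.


Lemma unit_of_ncol (u v w : 'rV[L]_3) : ~ collinear u v w -> mx3 u v w \in unitmx.
Proof. by move=> H; rewrite unitmxE unitfE; apply/eqP. Qed.

Lemma col_of_rel (u v w : 'rV[L]_3) (x y z : L) :
  (x == 1) || (y == 1) || (z == 1) -> x *: u + y *: v + z *: w = 0 -> collinear u v w.
Proof.
move=> H E; rewrite /collinear; apply/eqP/det0P; exists (row3 x y z); last by rewrite row3_mul.
apply/eqP => /rowP R; move: H (R i30) (R i31) (R i32); rewrite !mxE /=.
by move=> H1 x0 y0 z0; move: H1; rewrite x0 y0 z0 !(eq_sym 0) oner_eq0.
Qed.

Lemma gp_coef (f : 'I_4 -> 'rV[L]_3) : gen_pos4 f ->
  exists a b c, [/\ a != 0, b != 0, c != 0,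
    f i43 = a *: f i40 + b *: f i41 + c *: f i42 &
    mx3 (f i40) (f i41) (f i42) \in unitmx].
Proof.
move=> gp.
have GU : mx3 (f i40) (f i41) (f i42) \in unitmx by apply: unit_of_ncol; apply: gp.
set G := mx3 _ _ _ in GU *.
set r := f i43 *m invmx G.
have E : f i43 = r 0 i30 *: f i40 + r 0 i31 *: f i41 + r 0 i32 *: f i42.
  by rewrite -mx3_mul /r mulmxKV.
clearbody r.
exists (r 0 i30), (r 0 i31), (r 0 i32); split => //.
- apply/eqP => a0; apply: (gp i43 i41 i42) => //.
  apply: (@col_of_rel _ _ _ 1 (- r 0 i31) (- r 0 i32)); first by rewrite eqxx.
  apply/rowP => j; move/rowP/(_ j): E; rewrite !mxE a0 => ->; ring.
- apply/eqP => b0; apply: (gp i40 i43 i42) => //.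
  apply: (@col_of_rel _ _ _ (- r 0 i30) 1 (- r 0 i32)); first by rewrite eqxx orbT.
  apply/rowP => j; move/rowP/(_ j): E; rewrite !mxE b0 => ->; ring.
- apply/eqP => c0; apply: (gp i40 i41 i43) => //.
  apply: (@col_of_rel _ _ _ (- r 0 i30) (- r 0 i31) 1); first by rewrite eqxx !orbT.
  apply/rowP => j; move/rowP/(_ j): E; rewrite !mxE c0 => ->; ring.
Qed.

Lemma row3_diag (x y z a b c : L) :
  row3 x y z *m diag_mx (row3 a b c) = row3 (x * a) (y * b) (z * c).
Proof.
rewrite mul_mx_diag; apply/rowP => j; rewrite !mxE.
by case: (ord3_cases j) => -> /=.
Qed.

Lemma frame_map (f g : 'I_4 -> 'rV[L]_3) : gen_pos4 f -> gen_pos4 g ->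
  exists B, B \in unitmx /\ forall i, exists k, k != 0 /\ f i *m B = k *: g i.
Proof.
move=> /gp_coef [a [b [c [a0 b0 c0 Ef Uf]]]] /gp_coef [a' [b' [c' [a0' b0' c0' Eg Ug]]]].
set Gf := mx3 _ _ _ in Ef Uf; set Gg := mx3 _ _ _ in Eg Ug.
set D := diag_mx (row3 (a' / a) (b' / b) (c' / c)).
have key x y z : row3 x y z *m Gf *m (invmx Gf *m D *m Gg) =
    row3 (x * (a' / a)) (y * (b' / b)) (z * (c' / c)) *m Gg.
  by rewrite !mulmxA mulmxK // row3_diag.
exists (invmx Gf *m D *m Gg); split.
  rewrite !unitmx_mul unitmx_inv Uf Ug /= andbT.
  rewrite unitmxE det_diag unitfE; apply/prodf_neq0 => i _; rewrite mxE.
  by case: (ord3_cases i) => -> /=; rewrite mulf_neq0 ?invr_eq0.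
have R0 : f i40 = row3 1 0 0 *m Gf by rewrite row3_mul scale1r !scale0r !addr0.
have R1 : f i41 = row3 0 1 0 *m Gf by rewrite row3_mul scale1r !scale0r add0r addr0.
have R2 : f i42 = row3 0 0 1 *m Gf by rewrite row3_mul scale1r !scale0r !add0r.
have R3 : f i43 = row3 a b c *m Gf by rewrite row3_mul.
move=> i; case: (ord4_cases i) => ->.
- exists (a' / a); rewrite mulf_neq0 ?invr_eq0 //; split => //.
  by rewrite R0 key !mul0r mul1r row3_mul !scale0r !addr0.
- exists (b' / b); rewrite mulf_neq0 ?invr_eq0 //; split => //.
  by rewrite R1 key !mul0r mul1r row3_mul !scale0r addr0 add0r.
- exists (c' / c); rewrite mulf_neq0 ?invr_eq0 //; split => //.
  by rewrite R2 key !mul0r mul1r row3_mul !scale0r !add0r.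
- exists 1; split; first exact: oner_neq0.
  rewrite R3 key scale1r Eg row3_mul.
  by rewrite [a * _]mulrC [b * _]mulrC [c * _]mulrC !divfK.
Qed.

Lemma lin_aux (X Y Z : 'rV[L]_3) (a b c l0 l1 l2 l3 : L) :
  a *: (l0 *: X) + b *: (l1 *: Y) + c *: (l2 *: Z) = l3 *: (a *: X + b *: Y + c *: Z) ->
  (a * (l3 - l0)) *: X + (b * (l3 - l1)) *: Y + (c * (l3 - l2)) *: Z = 0.
Proof.
move=> E; apply/rowP => j; move/rowP/(_ j): E; rewrite !mxE => E.
have -> : (0 : L) = l3 * (a * X 0 j + b * Y 0 j + c * Z 0 j) -
   (a * (l0 * X 0 j) + b * (l1 * Y 0 j) + c * (l2 * Z 0 j)) by rewrite E subrr.
ring.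
Qed.

Lemma frame_unique (f : 'I_4 -> 'rV[L]_3) (B B' : 'M[L]_3) : gen_pos4 f -> B \in unitmx ->
  (forall i, exists l, f i *m B' = l *: (f i *m B)) -> exists l, B' = l *: B.
Proof.
move=> /gp_coef [a [b [c [a0 b0 c0 Ef Uf]]]] UB H.
case: (H i40) => l0 E0; case: (H i41) => l1 E1; case: (H i42) => l2 E2; case: (H i43) => l3 E3.
have MU : mx3 (f i40 *m B) (f i41 *m B) (f i42 *m B) \in unitmx.
  by rewrite -mx3_mulr unitmx_mul Uf UB.
have R : row3 (a * (l3 - l0)) (b * (l3 - l1)) (c * (l3 - l2)) = 0.
  have R' : row3 (a * (l3 - l0)) (b * (l3 - l1)) (c * (l3 - l2)) *m
       mx3 (f i40 *m B) (f i41 *m B) (f i42 *m B) = 0.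
    rewrite row3_mul; apply: lin_aux.
    by rewrite -E0 -E1 -E2 !scalemxAl -!mulmxDl -Ef E3.
  by move: (congr1 (mulmx^~ (invmx (mx3 (f i40 *m B) (f i41 *m B) (f i42 *m B)))) R');
    rewrite /= mulmxK // mul0mx.
have e0 : l0 = l3.
  move/rowP/(_ i30): R; rewrite !mxE /= => /eqP.
  by rewrite mulf_eq0 (negbTE a0) /= subr_eq0 => /eqP ->.
have e1 : l1 = l3.
  move/rowP/(_ i31): R; rewrite !mxE /= => /eqP.
  by rewrite mulf_eq0 (negbTE b0) /= subr_eq0 => /eqP ->.
have e2 : l2 = l3.
  move/rowP/(_ i32): R; rewrite !mxE /= => /eqP.
  by rewrite mulf_eq0 (negbTE c0) /= subr_eq0 => /eqP ->.
exists l3.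
rewrite -(mulKmx Uf B') mx3_mulr E0 E1 E2 e0 e1 e2 mx3_scale -mx3_mulr.
by rewrite -scalemxAr mulKmx.
Qed.


Section Frob.
Variable q : nat.
Hypothesis q_gt1 : (1 < q)%N.
Hypothesis Fadd : forall x y : L, (x + y) ^+ q = x ^+ q + y ^+ q.

Definition Fmx (B : 'M[L]_3) : 'M[L]_3 := map_mx (fun x => x ^+ q) B.

Lemma q_gt0 : (0 < q)%N. Proof. exact: ltnW. Qed.

Lemma Fsum (I : Type) (r : seq I) (P : pred I) (G : I -> L) :
  (\sum_(i <- r | P i) G i) ^+ q = \sum_(i <- r | P i) G i ^+ q.
Proof.
apply: (big_morph (fun x => x ^+ q)) => //.
by rewrite expr0n; case: q q_gt0.
Qed.

Lemma frobv_mul (u : 'rV[L]_3) (B : 'M[L]_3) : frobv q (u *m B) = frobv q u *m Fmx B.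
Proof.
apply/rowP => j; rewrite !mxE Fsum; apply: eq_bigr => k _.
by rewrite !mxE exprMn.
Qed.

Lemma frobvZ (c : L) (u : 'rV[L]_3) : frobv q (c *: u) = c ^+ q *: frobv q u.
Proof. by apply/rowP => j; rewrite !mxE exprMn. Qed.

Lemma FmxZ (c : L) (B : 'M[L]_3) : Fmx (c *: B) = c ^+ q *: Fmx B.
Proof. by apply/matrixP => i j; rewrite !mxE exprMn. Qed.

Lemma iter_frobv i (v : 'rV[L]_3) : iter i (frobv q) v = map_mx (fun x => x ^+ (q ^ i)) v.
Proof.
elim: i => [|i IH] /=; first by apply/rowP => j; rewrite !mxE expr1.
by rewrite IH; apply/rowP => j; rewrite !mxE expnSr exprM.
Qed.

Lemma iter_Fmx i (B : 'M[L]_3) : iter i Fmx B = map_mx (fun x => x ^+ (q ^ i)) B.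
Proof.
elim: i => [|i IH] /=; first by apply/matrixP => j k; rewrite !mxE expr1.
by rewrite IH; apply/matrixP => j k; rewrite !mxE expnSr exprM.
Qed.

Lemma iter_frobvZ i (c : L) (u : 'rV[L]_3) :
  iter i (frobv q) (c *: u) = c ^+ (q ^ i) *: iter i (frobv q) u.
Proof.
by rewrite !iter_frobv; apply/rowP => j; rewrite !mxE exprMn.
Qed.

Fixpoint sq (j : nat) : nat := if j is j'.+1 then (sq j' * q + 1)%N else 0%N.

Lemma sq_eq d : (q ^ d = (q - 1) * sq d + 1)%N.
Proof.
elim: d => [|d IH] /=; first by rewrite muln0.
rewrite expnSr IH; have := q_gt1; nia.
Qed.

Lemma sq_gt0 d : (0 < d)%N -> (0 < sq d)%N.
Proof. by case: d => //= d _; rewrite addn1. Qed.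

Lemma h90 d : #|L| = (q ^ d)%N -> (0 < d)%N ->
  forall x : L, x != 0 -> x ^+ sq d = 1 -> exists mu : L, mu != 0 /\ mu ^+ (q - 1) = x.
Proof.
move=> cardL d_gt0 x x0 xs.
set n := #|L|.-1.
have nE : n = ((q - 1) * sq d)%N by rewrite /n cardL sq_eq addn1.
have n_gt0 : (0 < n)%N by rewrite nE muln_gt0 subn_gt0 q_gt1 sq_gt0.
have unit_pow (y : L) : y != 0 -> y ^+ n = 1.
  move=> y0; have cn : #|L| = n.+1 by rewrite /n prednK // cardL expn_gt0 ltnW.
  by rewrite -(mulfK y0 (y ^+ n)) -exprSr -cn expf_card divff.
have : has n.-primitive_root (enum (predC1 (0 : L))).
  apply: cyclic.has_prim_root => //.
  - by apply/allP => y; rewrite mem_enum inE => y0; rewrite unity_rootE unit_pow.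
  - exact: enum_uniq.
  - by rewrite -cardE cardC1.
move=> /hasP [z _ pz].
have [[i _] /= xi] := prim_rootP pz (unit_pow x x0).
have : (n %| i * sq d)%N by rewrite (prim_order_dvd pz) exprM -xi xs.
rewrite nE dvdn_pmul2r ?sq_gt0 // => /dvdnP [k ik].
have z0 : z != 0.
  apply/eqP => z0; move: (prim_expr_order pz); rewrite z0 expr0n.
  by rewrite (negbTE (lt0n_neq0 n_gt0)) => /eqP; rewrite eq_sym oner_eq0.
exists (z ^+ k); split; first exact: expf_neq0.
by rewrite -exprM -ik xi.
Qed.

Lemma main d (f g : 'I_4 -> 'rV[L]_3) (sg : 'I_4 -> 'I_4) :
  #|L| = (q ^ d)%N -> (0 < d)%N -> gen_pos4 f -> gen_pos4 g ->
  (forall i, f i = frobv q (f (sg i))) -> (forall i, g i = frobv q (g (sg i))) ->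
  exists A, in_PGL3 q A /\ forall i, exists k, k != 0 /\ f i *m A = k *: g i.
Proof.
move=> cardL d_gt0 gf gg hf hg.
have [B [UB hB]] := frame_map gf gg.
have [c Ec] : exists c, Fmx B = c *: B.
  apply: (frame_unique gf UB) => i.
  have [k [k0 Ek]] := hB (sg i).
  have [k' [k0' Ek']] := hB i.
  exists (k ^+ q / k').
  by rewrite {1}hf -frobv_mul Ek frobvZ -hg Ek' scalerA divfK.
have iterB j : iter j Fmx B = c ^+ sq j *: B.
  elim: j => [|j IH] /=; first by rewrite scale1r.
  by rewrite IH FmxZ Ec scalerA -exprM -exprSr addn1.
have Bfix : iter d Fmx B = B.
  by rewrite iter_Fmx; apply/matrixP => i j; rewrite mxE -cardL expf_card.
have B0 : B != 0.
  by apply/eqP => B0; move: UB; rewrite B0 unitmxE det0 unitfE eqxx.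
have cs : c ^+ sq d = 1.
  have : (c ^+ sq d - 1) *: B = 0 by rewrite scalerBl scale1r -iterB Bfix subrr.
  by move/eqP; rewrite scalemx_eq0 (negbTE B0) orbF subr_eq0 => /eqP.
have c0 : c != 0.
  apply/eqP=> c0; move: cs; rewrite c0 expr0n (negbTE (lt0n_neq0 (sq_gt0 d_gt0))) /=.
  by move=> /esym/eqP; rewrite oner_eq0.
have csV : c^-1 ^+ sq d = 1 by rewrite exprVn cs invr1.
have [mu [mu0 Emu]] := h90 cardL d_gt0 (invr_neq0 c0) csV.
exists (mu *: B); split.
  split.
    move=> i j; move/matrixP/(_ i j): Ec; rewrite !mxE => Ecij; rewrite exprMn Ecij.
    have muq : mu ^+ q = mu ^+ (q - 1) * mu by rewrite -exprSr subn1 prednK // ltnW.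
    by rewrite muq Emu mulrA [c^-1 * mu * c]mulrAC mulVf // mul1r.
  by rewrite unitmxE detZ unitfE mulf_neq0 ?expf_neq0 // -unitfE -unitmxE.
move=> i; have [k [k0 Ek]] := hB i; exists (mu * k); split; first by rewrite mulf_neq0.
by rewrite -scalemxAr Ek scalerA.
Qed.

Lemma maps_onto_of (A : 'M[L]_3) (v w : 'rV[L]_3) (k : L) :
  in_PGL3 q A -> k != 0 -> v *m A = k *: w -> maps_onto q A v w.
Proof.
move=> [Aq _] k0 E.
have FA : Fmx A = A by apply/matrixP => i j; rewrite mxE Aq.
have itA i u : iter i (frobv q) (u *m A) = iter i (frobv q) u *m A.
  by elim: i => [|i IH] //=; rewrite IH frobv_mul FA.
split.
- move=> u [i [a [a0 ->]]]; exists i; exists (a * k ^+ (q ^ i)); split.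
    by rewrite mulf_neq0 // expf_neq0.
  by rewrite -scalemxAl -itA E iter_frobvZ scalerA.
- move=> u' [i [a [a0 ->]]]; exists (iter i (frobv q) v); split.
    by exists i, 1; rewrite oner_neq0 scale1r.
  exists (a / k ^+ (q ^ i)); split; first by rewrite mulf_neq0 ?invr_eq0 ?expf_neq0.
  by rewrite -itA E iter_frobvZ scalerA divfK // expf_neq0.
Qed.

End Frob.
End Gen.

Lemma addq (R : finFieldType) (p m : nat) : p \in [pchar R] ->
  forall x y : R, (x + y) ^+ (p ^ m) = x ^+ (p ^ m) + y ^+ (p ^ m).
Proof.
move=> ch x y; elim: m => [|m IH]; first by rewrite !expr1.
by rewrite expnSr !exprM IH -!(pFrobenius_autE ch) pFrobenius_autD_comm //; exact: mulrC.
Qed.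

Lemma frob_period (R : finFieldType) (q d : nat) (v : 'rV[R]_3) :
  #|R| = (q ^ d)%N -> iter d (frobv q) v = v.
Proof. by move=> cR; rewrite iter_frobv; apply/rowP => j; rewrite mxE -cR expf_card. Qed.

Unset Implicit Arguments.

Theorem lemma4p1 (p m : nat) (L2 L4 : finFieldType) :
  prime p -> (0 < m)%N ->
  #|L2| = ((p ^ m) ^ 2)%N -> #|L4| = ((p ^ m) ^ 4)%N ->
  (* (1) *)
  (forall p0 p' q0 q' : 'rV[L2]_3,
     closed_deg (p ^ m) 2 p0 -> closed_deg (p ^ m) 2 p' ->
     closed_deg (p ^ m) 2 q0 -> closed_deg (p ^ m) 2 q' ->
     gen_pos4 (pts22 (p ^ m) p0 p') -> gen_pos4 (pts22 (p ^ m) q0 q') ->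
     exists A : 'M[L2]_3,
       in_PGL3 (p ^ m) A /\ maps_onto (p ^ m) A p0 q0 /\ maps_onto (p ^ m) A p' q')
  /\
  (* (2) *)
  (forall p0 q0 : 'rV[L4]_3,
     closed_deg (p ^ m) 4 p0 -> closed_deg (p ^ m) 4 q0 ->
     gen_pos4 (pts4 (p ^ m) p0) -> gen_pos4 (pts4 (p ^ m) q0) ->
     exists A : 'M[L4]_3, in_PGL3 (p ^ m) A /\ maps_onto (p ^ m) A p0 q0).
Proof.
move=> pp m0 c2 c4.
have q_gt1 : (1 < p ^ m)%N.
  have h1 := prime_gt1 pp; have h2 : (0 < p ^ m.-1)%N by rewrite expn_gt0 prime_gt0.
  have -> : m = m.-1.+1 by rewrite prednK.
  rewrite expnS; nia.
have ch2 : p \in [pchar L2] by apply: (card_finPcharP (n := (m * 2)%N)); rewrite // c2 expnM.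
have ch4 : p \in [pchar L4] by apply: (card_finPcharP (n := (m * 4)%N)); rewrite // c4 expnM.
split.
- move=> p0 p' q0 q' _ _ _ _ gp gq.
  pose sg := fun i : 'I_4 => match nat_of_ord i with 0 => i41 | 1 => i40 | 2 => i43 | _ => i42 end.
  have hf (v w : 'rV[L2]_3) i : pts22 (p ^ m) v w i = frobv (p ^ m) (pts22 (p ^ m) v w (sg i)).
    by case: (ord4_cases i) => -> //=; rewrite -[RHS]/(iter 2 _ _) frob_period.
  have [A [PA HA]] := main q_gt1 (addq m ch2) c2 isT gp gq (hf p0 p') (hf q0 q').
  exists A; split => //; split.
  + by have [k [k0 Ek]] := HA i40; exact: (maps_onto_of q_gt1 (addq m ch2) PA k0 Ek).
  + by have [k [k0 Ek]] := HA i42; exact: (maps_onto_of q_gt1 (addq m ch2) PA k0 Ek).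
- move=> p0 q0 _ _ gp gq.
  pose sg := fun i : 'I_4 => match nat_of_ord i with 0 => i43 | 1 => i40 | 2 => i41 | _ => i42 end.
  have hf (v : 'rV[L4]_3) i : pts4 (p ^ m) v i = frobv (p ^ m) (pts4 (p ^ m) v (sg i)).
    by case: (ord4_cases i) => -> //=; rewrite -[RHS]/(iter 4 _ _) frob_period.
  have [A [PA HA]] := main q_gt1 (addq m ch4) c4 isT gp gq (hf p0) (hf q0).
  exists A; split => //.
  by have [k [k0 Ek]] := HA i40; exact: (maps_onto_of q_gt1 (addq m ch4) PA k0 Ek).
Qed.
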